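(* The Urysohn space $\mathbb U$ is almost-isometry unique: every metric space almost isometric to $\mathbb U$ is isometric to $\mathbb U$.
   Context: $\mathbb U$ denotes Urysohn's universal separable metric space: the unique (up to isometry) complete separable metric space such that for every finite metric space $F=\{x_0,\dots,x_n\}$, every isometry $\{x_0,\dots,x_{n-1}\}\to\mathbb U$ extends to an isometry $F\to\mathbb U$. For $\lambda>1$, an injection $f$ is $\lambda$-bi-Lipschitz if for all distinct $a,b$ in its domain $d(f(a),f(b))<\lambda d(a,b)$ and $d(a,b)<\lambda d(f(a),f(b))$. Two metric spaces $X,Y$ are almost isometric if for every $\lambda>1$ there is a $\lambda$-bi-Lipschitz bijection from $X$ onto $Y$. *)

(* Defs.v *)
From Stdlib Require Import Reals List.
Open Scope R_scope.

Definition is_metric {T : Type} (d : T -> T -> R) : Prop :=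
  (forall x y, d x y = 0 <-> x = y) /\
  (forall x y, d x y = d y x) /\
  (forall x y z, d x z <= d x y + d y z).

Definition cauchy_seq {T : Type} (d : T -> T -> R) (u : nat -> T) : Prop :=
  forall eps, 0 < eps -> exists N, forall m n, (N <= m)%nat -> (N <= n)%nat ->
    d (u m) (u n) < eps.

Definition converges_to {T : Type} (d : T -> T -> R) (u : nat -> T) (l : T) : Prop :=
  forall eps, 0 < eps -> exists N, forall n, (N <= n)%nat -> d (u n) l < eps.

Definition complete_metric {T : Type} (d : T -> T -> R) : Prop :=
  forall u : nat -> T, cauchy_seq d u -> exists l, converges_to d u l.

(* separable: there is a countable dense subset (enumerated by a sequence;
   the space is nonempty in our use). *)
Definition separable_metric {T : Type} (d : T -> T -> R) : Prop :=
  exists s : nat -> T, forall x eps, 0 < eps -> exists n, d x (s n) < eps.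

(* Urysohn finite extension property: for every finite metric space F and
   point x0 of F, every isometry F \ {x0} -> U extends to an isometry F -> U.
   (Values of f at x0 are irrelevant.) *)
Definition finite_extension_property {U : Type} (dU : U -> U -> R) : Prop :=
  forall (F : Type) (dF : F -> F -> R),
    is_metric dF -> (exists l : list F, forall x, In x l) ->
    forall (x0 : F) (f : F -> U),
      (forall x y, x <> x0 -> y <> x0 -> dU (f x) (f y) = dF x y) ->
      exists g : F -> U,
        (forall x, x <> x0 -> g x = f x) /\
        (forall x y, dU (g x) (g y) = dF x y).

Definition urysohn_space {U : Type} (dU : U -> U -> R) : Prop :=
  is_metric dU /\ complete_metric dU /\ separable_metric dU /\
  finite_extension_property dU.

Definition bijective_map {X Y : Type} (f : X -> Y) : Prop :=
  (forall a b, f a = f b -> a = b) /\ (forall y, exists x, f x = y).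

Definition bilipschitz_bij {X Y : Type} (dX : X -> X -> R) (dY : Y -> Y -> R)
  (lam : R) (f : X -> Y) : Prop :=
  bijective_map f /\
  forall a b, a <> b ->
    dY (f a) (f b) < lam * dX a b /\ dX a b < lam * dY (f a) (f b).

Definition almost_isometric {X Y : Type} (dX : X -> X -> R) (dY : Y -> Y -> R) : Prop :=
  forall lam, 1 < lam -> exists f : X -> Y, bilipschitz_bij dX dY lam f.

Definition isometric {X Y : Type} (dX : X -> X -> R) (dY : Y -> Y -> R) : Prop :=
  exists f : X -> Y, bijective_map f /\ forall a b, dY (f a) (f b) = dX a b.

(* Main.v *)
Require Import Defs.
From Stdlib Require Import Reals Lra Lia Psatz List Classical ClassicalEpsilon ProofIrrelevance.
From Stdlib Require Import Reals Lra Lia Psatz List Classical ClassicalEpsilon ProofIrrelevance.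
Open Scope R_scope.

Section Met.
Context {T : Type} (d : T -> T -> R) (Hm : is_metric d).
Lemma d_refl x : d x x = 0.
Proof. destruct Hm as [H _]. apply H; reflexivity. Qed.
Lemma d_sym x y : d x y = d y x.
Proof. destruct Hm as [_ [H _]]. apply H. Qed.
Lemma d_tri x y z : d x z <= d x y + d y z.
Proof. destruct Hm as [_ [_ H]]. apply H. Qed.
Lemma d_pos x y : 0 <= d x y.
Proof. pose proof (d_tri x y x). rewrite d_refl, (d_sym y x) in H. lra. Qed.
Lemma d_eq x y : d x y = 0 -> x = y.
Proof. destruct Hm as [H _]. apply H. Qed.
End Met.

Definition Kat {T} (d : T -> T -> R) (p : nat -> T) (g : nat -> R) (n : nat) :=
  forall i j, (i < n)%nat -> (j < n)%nat ->
    g i - g j <= d (p i) (p j) /\ d (p i) (p j) <= g i + g j.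

Definition Ext {T} (d : T -> T -> R) :=
  forall n p g, Kat d p g n -> exists z, forall i, (i < n)%nat -> d z (p i) = g i.

Lemma Kat_nonneg {T} (d : T -> T -> R) p g n : is_metric d -> Kat d p g n ->
  forall i, (i < n)%nat -> 0 <= g i.
Proof. intros Hm HK i Hi. destruct (HK i i Hi Hi) as [_ H]. rewrite (d_refl d Hm) in H. lra. Qed.

Lemma Kat_eq {T} (d : T -> T -> R) p g n : is_metric d -> Kat d p g n ->
  forall i j, (i < n)%nat -> (j < n)%nat -> p i = p j -> g i = g j.
Proof. intros Hm HK i j Hi Hj E. destruct (HK i j Hi Hj) as [H1 _]. destruct (HK j i Hj Hi) as [H2 _].
  rewrite E, (d_refl d Hm) in H1, H2. lra. Qed.

Lemma finite_sig {A} (L : list A) : forall (P : A -> Prop), (forall u, P u -> In u L) ->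
  exists l : list (sig P), forall x, In x l.
Proof.
  induction L as [|a L IH]; intros P HP.
  - exists nil. intros [u pu]. destruct (HP u pu).
  - set (P' := fun u => P u /\ u <> a).
    destruct (IH P') as [l' Hl'].
    { intros u [pu nu]. destruct (HP u pu) as [E|E]; [congruence|exact E]. }
    set (f := fun x : sig P' => exist P (proj1_sig x) (proj1 (proj2_sig x))).
    destruct (classic (P a)) as [pa|npa].
    + exists (exist P a pa :: map f l'). intros [u pu].
      destruct (classic (u = a)) as [E|E].
      * subst. left. f_equal. apply proof_irrelevance.
      * right. apply in_map_iff. exists (exist P' u (conj pu E)). split; [unfold f; simpl; f_equal; apply proof_irrelevance|apply Hl'].
    + exists (map f l'). intros [u pu].
      assert (E : u <> a) by (intro; subst; contradiction).
      apply in_map_iff. exists (exist P' u (conj pu E)). split; [unfold f; simpl; f_equal; apply proof_irrelevance|apply Hl'].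
Qed.

Lemma U_Ext {U} (dU : U -> U -> R) (u0 : U) : is_metric dU -> finite_extension_property dU -> Ext dU.
Proof.
  intros Hm HF n p g HK.
  destruct (classic (exists i, (i < n)%nat /\ g i = 0)) as [[i [Hi Hg]]|Hno].
  - exists (p i). intros j Hj.
    destruct (HK i j Hi Hj) as [_ H1]. destruct (HK j i Hj Hi) as [H2 _].
    rewrite (d_sym dU Hm (p j)) in H2. lra.
  - assert (Hpos : forall i, (i < n)%nat -> 0 < g i).
    { intros i Hi. pose proof (Kat_nonneg dU p g n Hm HK i Hi).
      destruct (Rle_lt_or_eq_dec _ _ H) as [H'|H']; [exact H'|].
      exfalso; apply Hno; exists i; split; auto. }
    set (P := fun u => exists i, (i < n)%nat /\ p i = u).
    set (hU := fun u => epsilon (inhabits 0) (fun r => exists i, (i < n)%nat /\ p i = u /\ g i = r)).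
    assert (hUs : forall i, (i < n)%nat -> hU (p i) = g i).
    { intros i Hi. unfold hU.
      destruct (epsilon_spec (inhabits 0) (fun r => exists i0, (i0 < n)%nat /\ p i0 = p i /\ g i0 = r))
        as [j [Hj [E1 E2]]].
      { exists (g i), i. auto. }
      rewrite <- E2. apply (Kat_eq dU p g n Hm HK); auto. }
    assert (hUP : forall a : sig P, exists i, (i < n)%nat /\ proj1_sig a = p i /\ hU (proj1_sig a) = g i).
    { intros [u [i [Hi E]]]. exists i. simpl. subst. auto. }
    set (F := option (sig P)).
    set (dF := fun x y : F => match x, y with
                | Some a, Some b => dU (proj1_sig a) (proj1_sig b)
                | None, Some b => hU (proj1_sig b)
                | Some a, None => hU (proj1_sig a)
                | None, None => 0 end).
    assert (HmF : is_metric dF).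
    { split; [|split].
      - intros [a|] [b|]; simpl; split; intro H.
        + destruct a as [u pu], b as [v pv]; simpl in *.
          apply (d_eq dU Hm) in H. subst. f_equal. f_equal. apply proof_irrelevance.
        + inversion H; subst. apply (d_refl dU Hm).
        + exfalso. destruct (hUP a) as [i [Hi [_ E]]]. pose proof (Hpos i Hi). lra.
        + discriminate.
        + exfalso. destruct (hUP b) as [i [Hi [_ E]]]. pose proof (Hpos i Hi). lra.
        + discriminate.
        + reflexivity.
        + reflexivity.
      - intros [a|] [b|]; simpl; auto. apply (d_sym dU Hm).
      - intros [a|] [b|] [c|]; simpl;
        try (destruct (hUP a) as [i [Hi [Ea Ha]]]);
        try (destruct (hUP b) as [j [Hj [Eb Hb]]]);
        try (destruct (hUP c) as [k [Hk [Ec Hc]]]);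
        try rewrite Ea in *; try rewrite Eb in *; try rewrite Ec in *;
        try rewrite Ha; try rewrite Hb; try rewrite Hc.
        + apply (d_tri dU Hm).
        + destruct (HK i j Hi Hj). lra.
        + destruct (HK i k Hi Hk). lra.
        + pose proof (hUs i Hi). lra.
        + destruct (HK k j Hk Hj). rewrite (d_sym dU Hm) in H. lra.
        + pose proof (Hpos j Hj). lra.
        + lra.
        + lra. }
    assert (Hfin : exists l : list F, forall x, In x l).
    { destruct (finite_sig (map p (seq 0 n)) P) as [l Hl].
      { intros u [i [Hi E]]. subst. apply in_map. apply in_seq. lia. }
      exists (None :: map Some l). intros [a|]; [right; apply in_map; apply Hl|left; reflexivity]. }
    set (f := fun x : F => match x with Some a => proj1_sig a | None => u0 end).
    destruct (HF F dF HmF Hfin None f) as [g' [Hg1 Hg2]].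
    { intros [a|] [b|] Ha Hb; try congruence. reflexivity. }
    exists (g' None). intros i Hi.
    set (a := exist P (p i) (ex_intro _ i (conj Hi eq_refl)) : sig P).
    pose proof (Hg2 None (Some a)) as H. rewrite (Hg1 (Some a)) in H by discriminate.
    simpl in H. rewrite H. apply hUs; auto.
Qed.

Lemma bound_fun (f : nat -> R) n : exists G, 0 <= G /\ forall i, (i < n)%nat -> f i <= G.
Proof.
  induction n as [|n [G [HG H]]].
  - exists 0. split; [lra|intros; lia].
  - exists (Rmax G (f n)). split. { apply Rle_trans with G; [lra|apply Rmax_l]. }
    intros i Hi. destruct (Nat.eq_dec i n) as [->|Hne]; [apply Rmax_r|].
    apply Rle_trans with G; [apply H; lia|apply Rmax_l].
Qed.

Lemma AP_X {X U} (dX : X -> X -> R) (dU : U -> U -> R) :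
  is_metric dX -> is_metric dU -> Ext dU -> almost_isometric dX dU ->
  forall n p g eps, Kat dX p g n -> 0 < eps ->
  exists z, forall i, (i < n)%nat -> Rabs (dX z (p i) - g i) <= eps.
Proof.
  intros HX HU HE HA n p g eps HK Heps.
  destruct (bound_fun g n) as [G [HG0 HG]].
  set (s := 1 + eps / (G + 1)).
  assert (Hs1 : 1 < s). { unfold s. assert (0 < eps / (G+1)) by (apply Rdiv_lt_0_compat; lra). lra. }
  assert (HsG : (s - 1) * G <= eps).
  { unfold s. replace (1 + eps / (G + 1) - 1) with (eps / (G+1)) by ring.
    unfold Rdiv. rewrite Rmult_assoc. 
    assert (G * / (G+1) <= 1).
    { apply Rmult_le_reg_r with (G+1); [lra|]. rewrite Rmult_assoc, Rinv_l by lra. lra. }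
    rewrite (Rmult_comm (/ (G+1)) G). nra. }
  set (lam := sqrt s).
  assert (Hl2 : lam * lam = s) by (apply sqrt_sqrt; lra).
  assert (Hl1 : 1 < lam). { unfold lam. rewrite <- sqrt_1. apply sqrt_lt_1; lra. }
  destruct (HA lam Hl1) as [phi [[Hinj Hsur] Hbl]].
  set (mu := / lam).
  assert (Hlm : lam * mu = 1) by (unfold mu; field; lra).
  assert (Hmu0 : 0 < mu) by (unfold mu; apply Rinv_0_lt_compat; lra).
  assert (Hmu1 : mu < 1) by nra.
  set (c := (lam - mu) * G).
  assert (Hc0 : 0 <= c) by (unfold c; nra).
  set (h := fun i => g i * mu + c).
  assert (Hg0 := Kat_nonneg dX p g n HX HK).
  assert (HKU : Kat dU (fun i => phi (p i)) h n).
  { intros i j Hi Hj. unfold h.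
    pose proof (Hg0 i Hi). pose proof (Hg0 j Hj). pose proof (HG i Hi). pose proof (HG j Hj).
    destruct (classic (p i = p j)) as [E|E].
    - rewrite E, (d_refl dU HU). rewrite (Kat_eq dX p g n HX HK i j Hi Hj E). nra.
    - destruct (Hbl _ _ E) as [B1 B2]. destruct (HK i j Hi Hj) as [K1 K2].
      set (e := dU (phi (p i)) (phi (p j))) in *. set (dd := dX (p i) (p j)) in *.
      split.
      + assert ((g i - g j) * mu <= dd * mu) by nra.
        assert (dd * mu < e) by nra. nra.
      + assert (lam * dd <= lam * (g i + g j)) by nra.
        assert ((lam - mu) * (g i + g j) <= 2 * c) by (unfold c; nra).
        nra. }
  destruct (HE n _ h HKU) as [w Hw].
  destruct (Hsur w) as [z Hz]. subst w.
  exists z. intros i Hi. pose proof (Hw i Hi) as Hwi. unfold h in Hwi.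
  pose proof (Hg0 i Hi). pose proof (HG i Hi).
  destruct (classic (z = p i)) as [E|E].
  - subst z. rewrite (d_refl dU HU) in Hwi. rewrite (d_refl dX HX).
    assert (g i = 0) by nra. rewrite H1. rewrite Rminus_0_r, Rabs_R0. lra.
  - destruct (Hbl _ _ E) as [B1 B2]. rewrite Hwi in B1, B2.
    set (dd := dX z (p i)) in *.
    apply Rabs_le. split.
    +
      assert (mu * (g i * mu + c) < mu * (lam * dd)) by nra.
      assert (mu * (lam * dd) = dd) by (rewrite <- Rmult_assoc, (Rmult_comm mu lam), Hlm; ring).
      assert (g i * (1 - mu * mu) <= G * (s - 1)).
      { assert (1 - mu*mu <= s - 1) by nra. assert (0 <= 1 - mu*mu) by nra. nra. }
      nra.
    + assert (lam * (g i * mu + c) = g i + lam * c) by (rewrite Rmult_plus_distr_l, <- Rmult_assoc, (Rmult_comm lam (g i)), Rmult_assoc, Hlm; ring).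
      assert (lam * c = (s - 1) * G) by (unfold c; rewrite <- Hl2; rewrite <- Rmult_assoc, Rmult_minus_distr_l, Hlm; ring).
      nra.
Qed.

Lemma d_rev {T} (d : T -> T -> R) : is_metric d -> forall x y z, Rabs (d x z - d y z) <= d x y.
Proof. intros Hm x y z. apply Rabs_le. pose proof (d_tri d Hm x y z). pose proof (d_tri d Hm y x z).
  rewrite (d_sym d Hm y x) in H0. lra. Qed.

Lemma max_fun (f : nat -> R) n : (forall i, (i < n)%nat -> 0 <= f i) ->
  exists M, 0 <= M /\ (forall i, (i < n)%nat -> f i <= M) /\ (M = 0 \/ exists j, (j < n)%nat /\ M = f j).
Proof.
  induction n as [|n IH]; intros Hf.
  - exists 0. split; [lra|split; [intros; lia|left; auto]].
  - destruct IH as [M [HM0 [HM1 HM2]]]. { intros; apply Hf; lia. }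
    destruct (Rle_dec M (f n)) as [Hle|Hlt].
    + exists (f n). split; [lra|split].
      * intros i Hi. destruct (Nat.eq_dec i n) as [->|]; [lra|]. apply Rle_trans with M; [apply HM1; lia|lra].
      * right. exists n. split; auto.
    + exists M. split; [lra|split].
      * intros i Hi. destruct (Nat.eq_dec i n) as [->|]; [lra|]. apply HM1; lia.
      * destruct HM2 as [->|[j [Hj E]]]; [left; auto|right; exists j; split; [lia|auto]].
Qed.

Lemma abs_bt a b : Rabs a <= b -> -b <= a <= b.
Proof. unfold Rabs; destruct (Rcase_abs a); intros; lra. Qed.

Definition APprop {X} (dX : X -> X -> R) := forall n p g eps, Kat dX p g n -> 0 < eps ->
  exists z, forall i, (i < n)%nat -> Rabs (dX z (p i) - g i) <= eps.

Lemma refine {X} (dX : X -> X -> R) : is_metric dX -> APprop dX ->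
  forall n p g, Kat dX p g n -> forall z delta, 0 <= delta ->
  (forall i, (i < n)%nat -> Rabs (dX z (p i) - g i) <= delta) -> forall eps, 0 < eps ->
  exists z', (forall i, (i < n)%nat -> Rabs (dX z' (p i) - g i) <= eps) /\ dX z z' <= delta + eps.
Proof.
  intros HX HAP n p g HK z delta Hd Hz eps Heps.
  destruct (max_fun (fun i => Rabs (dX z (p i) - g i)) n) as [M [HM0 [HM1 HM2]]].
  { intros; apply Rabs_pos. }
  assert (HMd : M <= delta).
  { destruct HM2 as [->|[j [Hj ->]]]; [lra|apply Hz; auto]. }
  set (p' := fun i => if Nat.ltb i n then p i else z).
  set (g' := fun i => if Nat.ltb i n then g i else M).
  assert (Hg0 := Kat_nonneg dX p g n HX HK).
  assert (HK' : Kat dX p' g' (S n)).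
  { intros i j Hi Hj. unfold p', g'.
    destruct (Nat.ltb_spec i n) as [Ei|Ei]; destruct (Nat.ltb_spec j n) as [Ej|Ej].
    - apply HK; auto.
    - pose proof (HM1 i Ei) as H. apply abs_bt in H. rewrite (d_sym dX HX). lra.
    - pose proof (HM1 j Ej) as H. apply abs_bt in H. split; [|lra].
      pose proof (Hg0 j Ej). pose proof (d_pos dX HX z (p j)).
      destruct HM2 as [->|[k [Hk ->]]]; [lra|].
      destruct (HK k j Hk Ej) as [K1 K2].
      pose proof (d_tri dX HX (p k) z (p j)). rewrite (d_sym dX HX (p k) z) in H2.
      pose proof (d_tri dX HX z (p j) (p k)). rewrite (d_sym dX HX (p j) (p k)) in H3.
      unfold Rabs; destruct (Rcase_abs _); lra.
    - assert (i = n) by lia. assert (j = n) by lia. subst. rewrite (d_refl dX HX). lra. }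
  destruct (HAP (S n) p' g' eps HK' Heps) as [z' Hz'].
  exists z'. split.
  - intros i Hi. pose proof (Hz' i ltac:(lia)) as H. unfold p', g' in H.
    replace (Nat.ltb i n) with true in H by (symmetry; apply Nat.ltb_lt; auto). exact H.
  - pose proof (Hz' n ltac:(lia)) as H. unfold p', g' in H. rewrite Nat.ltb_irrefl in H.
    apply abs_bt in H. rewrite (d_sym dX HX). lra.
Qed.

Lemma dc {A} (P : nat -> A -> Prop) (Rl : nat -> A -> A -> Prop) :
  (exists a, P 0%nat a) -> (forall k a, P k a -> exists b, P (S k) b /\ Rl k a b) ->
  exists u : nat -> A, forall k, P k (u k) /\ Rl k (u k) (u (S k)).
Proof.
  intros [a0 Ha0] Hs.
  set (i := inhabits a0).
  set (nxt := fun k a => epsilon i (fun b => P (S k) b /\ Rl k a b)).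
  set (u := fix u (k : nat) : A := match k with O => a0 | S k => nxt k (u k) end).
  assert (HP : forall k, P k (u k)).
  { induction k; simpl; auto. apply (epsilon_spec i (fun b => P (S k) b /\ Rl k (u k) b)). apply Hs; auto. }
  exists u. intros k. split; auto. simpl.
  apply (epsilon_spec i (fun b => P (S k) b /\ Rl k (u k) b)). apply Hs; auto.
Qed.

Lemma zero_of_small a : (forall eta, 0 < eta -> Rabs a <= eta) -> a = 0.
Proof. intros H. destruct (Req_dec a 0) as [|Hn]; auto. exfalso.
  pose proof (Rabs_pos_lt a Hn). specialize (H (Rabs a / 2) ltac:(lra)). lra. Qed.

Lemma half_small eps : 0 < eps -> exists N, forall m, (N <= m)%nat -> (/2)^m < eps.
Proof. intros He. destruct (pow_lt_1_zero (/2) ltac:(rewrite Rabs_pos_eq; lra) eps He) as [N HN].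
  exists N. intros m Hm. specialize (HN m Hm). rewrite Rabs_pos_eq in HN; auto.
  apply pow_le; lra. Qed.

Lemma Ext_X {X} (dX : X -> X -> R) : is_metric dX -> complete_metric dX -> APprop dX -> Ext dX.
Proof.
  intros HX HC HAP n p g HK.
  set (e := fun k : nat => (/2)^k).
  assert (He0 : forall k, 0 < e k) by (intro; apply pow_lt; lra).
  assert (HeS : forall k, e k = 2 * e (S k)) by (intro; unfold e; simpl; field).
  destruct (dc (fun k z => forall i, (i < n)%nat -> Rabs (dX z (p i) - g i) <= e k)
               (fun k z z' => dX z z' <= e k + e (S k))) as [u Hu].
  - apply HAP; auto; unfold e; simpl; lra.
  - intros k z Hz. apply (refine dX HX HAP n p g HK z (e k)); auto; left; auto.
  - assert (Hgeo : forall k j, dX (u k) (u (k + j)%nat) <= 4 * e k - 4 * e (k + j)%nat).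
    { intros k j. induction j.
      - rewrite Nat.add_0_r, (d_refl dX HX). lra.
      - replace (k + S j)%nat with (S (k + j)) by lia.
        pose proof (d_tri dX HX (u k) (u (k + j)%nat) (u (S (k + j)))).
        destruct (Hu (k + j)%nat) as [_ H2]. pose proof (HeS (k+j)%nat). pose proof (He0 (S (k+j))). lra. }
    assert (Hgeo' : forall k m, (k <= m)%nat -> dX (u k) (u m) <= 4 * e k).
    { intros k m Hkm. replace m with (k + (m - k))%nat by lia. pose proof (Hgeo k (m-k)%nat).
      pose proof (He0 (k + (m-k))%nat). lra. }
    destruct (HC u) as [l Hl].
    { intros eps Heps. destruct (half_small (eps/8) ltac:(lra)) as [N HN]. exists N.
      intros m m' Hm Hm'. pose proof (Hgeo' N m Hm). pose proof (Hgeo' N m' Hm').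
      pose proof (d_tri dX HX (u m) (u N) (u m')). pose proof (d_sym dX HX (u m) (u N)).
      specialize (HN N (le_n _)). fold (e N) in HN. lra. }
    exists l. intros i Hi. apply Rminus_diag_uniq. apply zero_of_small. intros eta Heta.
    destruct (Hl (eta/2) ltac:(lra)) as [N1 HN1]. destruct (half_small (eta/2) ltac:(lra)) as [N2 HN2].
    set (m := Nat.max N1 N2).
    specialize (HN1 m ltac:(lia)). specialize (HN2 m ltac:(lia)). fold (e m) in HN2.
    destruct (Hu m) as [Hm _]. specialize (Hm i Hi).
    pose proof (d_rev dX HX l (u m) (p i)). rewrite (d_sym dX HX l (u m)) in H.
    replace (dX l (p i) - g i) with ((dX l (p i) - dX (u m) (p i)) + (dX (u m) (p i) - g i)) by ring.
    eapply Rle_trans; [apply Rabs_triang|].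
    lra.
Qed.

Lemma nth_snoc {A} (l : list A) (q d0 : A) i :
  nth i (l ++ q :: nil) d0 = if Nat.ltb i (length l) then nth i l d0 else if Nat.eqb i (length l) then q else d0.
Proof.
  destruct (Nat.ltb_spec i (length l)).
  - apply app_nth1; auto.
  - rewrite app_nth2 by auto. destruct (Nat.eqb_spec i (length l)).
    + subst. rewrite Nat.sub_diag. reflexivity.
    + destruct (i - length l)%nat eqn:E; [lia|]. simpl. destruct n0; reflexivity.
Qed.

Definition Good {X U} (dX : X -> X -> R) (dU : U -> U -> R) (sX : nat -> X) (sU : nat -> U)
  (d0 : X * U) (l : list (X * U)) :=
  (forall i j, (i < length l)%nat -> (j < length l)%nat ->
     dX (fst (nth i l d0)) (fst (nth j l d0)) = dU (snd (nth i l d0)) (snd (nth j l d0))) /\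
  (forall k, (2 * k < length l)%nat -> fst (nth (2 * k) l d0) = sX k) /\
  (forall k, (2 * k + 1 < length l)%nat -> snd (nth (2 * k + 1) l d0) = sU k).

Lemma good_snoc {X U} (dX : X -> X -> R) (dU : U -> U -> R) sX sU d0 l x y :
  is_metric dX -> is_metric dU -> Good dX dU sX sU d0 l ->
  (forall i, (i < length l)%nat -> dX x (fst (nth i l d0)) = dU y (snd (nth i l d0))) ->
  (forall k, length l = (2 * k)%nat -> x = sX k) ->
  (forall k, length l = (2 * k + 1)%nat -> y = sU k) ->
  Good dX dU sX sU d0 (l ++ (x, y) :: nil).
Proof.
  intros HX HU [G1 [G2 G3]] Hxy Hx Hy.
  unfold Good. rewrite length_app. change (length ((x, y) :: nil)) with 1%nat. split; [|split].
  - intros i j Hi Hj. rewrite !nth_snoc.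
    destruct (Nat.ltb_spec i (length l)); destruct (Nat.ltb_spec j (length l)).
    + apply G1; auto.
    + replace (Nat.eqb j (length l)) with true by (symmetry; apply Nat.eqb_eq; lia). simpl.
      rewrite (d_sym dX HX), (d_sym dU HU). apply Hxy; auto.
    + replace (Nat.eqb i (length l)) with true by (symmetry; apply Nat.eqb_eq; lia). simpl. apply Hxy; auto.
    + replace (Nat.eqb i (length l)) with true by (symmetry; apply Nat.eqb_eq; lia).
      replace (Nat.eqb j (length l)) with true by (symmetry; apply Nat.eqb_eq; lia). simpl.
      rewrite (d_refl dX HX), (d_refl dU HU). reflexivity.
  - intros k Hk. rewrite nth_snoc. destruct (Nat.ltb_spec (2 * k) (length l)); [apply G2; auto|].
    replace (Nat.eqb (2*k) (length l)) with true by (symmetry; apply Nat.eqb_eq; lia). simpl. apply Hx; lia.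
  - intros k Hk. rewrite nth_snoc. destruct (Nat.ltb_spec (2 * k + 1) (length l)); [apply G3; auto|].
    replace (Nat.eqb (2*k+1) (length l)) with true by (symmetry; apply Nat.eqb_eq; lia). simpl. apply Hy; lia.
Qed.

Lemma bf {X U} (dX : X -> X -> R) (dU : U -> U -> R) (sX : nat -> X) (sU : nat -> U) :
  is_metric dX -> is_metric dU -> Ext dX -> Ext dU ->
  exists (a : nat -> X) (b : nat -> U), (forall i j, dX (a i) (a j) = dU (b i) (b j)) /\
    (forall k, a (2 * k)%nat = sX k) /\ (forall k, b (2 * k + 1)%nat = sU k).
Proof.
  intros HX HU EX EU.
  set (d0 := (sX 0%nat, sU 0%nat)).
  destruct (dc (fun m l => length l = m /\ Good dX dU sX sU d0 l)
               (fun m l l' => exists q, l' = l ++ q :: nil)) as [u Hu].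
  - exists nil. split; auto. split; [|split]; simpl; intros; lia.
  - intros m l [Hlen HG]. destruct HG as [G1 [G2 G3]] eqn:HGe.
    destruct (Nat.Even_or_Odd m) as [[k Hk]|[k Hk]].
    + set (x := sX k).
      destruct (EU m (fun i => snd (nth i l d0)) (fun i => dX x (fst (nth i l d0)))) as [y Hy].
      { intros i j Hi Hj. rewrite <- Hlen in Hi, Hj. rewrite <- (G1 i j Hi Hj).
        pose proof (d_rev dX HX x (fst (nth j l d0)) (fst (nth i l d0))) as H1.
        apply abs_bt in H1.
        rewrite (d_sym dX HX (fst (nth j l d0)) (fst (nth i l d0))) in H1.
        pose proof (d_tri dX HX (fst (nth i l d0)) x (fst (nth j l d0))).
        rewrite (d_sym dX HX (fst (nth i l d0)) x) in H. lra. }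
      exists (l ++ (x, y) :: nil). split; [|eexists; reflexivity].
      split; [rewrite length_app; simpl; lia|].
      apply good_snoc; auto.
      * intros i Hi. simpl. rewrite Hy by lia. reflexivity.
      * intros k' Hk'. unfold x. f_equal. lia.
      * intros k' Hk'. lia.
    + set (y := sU k).
      destruct (EX m (fun i => fst (nth i l d0)) (fun i => dU y (snd (nth i l d0)))) as [x Hx].
      { intros i j Hi Hj. rewrite <- Hlen in Hi, Hj. rewrite (G1 i j Hi Hj).
        pose proof (d_rev dU HU y (snd (nth j l d0)) (snd (nth i l d0))) as H1.
        apply abs_bt in H1.
        rewrite (d_sym dU HU (snd (nth j l d0)) (snd (nth i l d0))) in H1.
        pose proof (d_tri dU HU (snd (nth i l d0)) y (snd (nth j l d0))).
        rewrite (d_sym dU HU (snd (nth i l d0)) y) in H. lra. }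
      exists (l ++ (x, y) :: nil). split; [|eexists; reflexivity].
      split; [rewrite length_app; simpl; lia|].
      apply good_snoc; auto.
      * intros i Hi. simpl. rewrite Hx by lia. reflexivity.
      * intros k' Hk'. lia.
      * intros k' Hk'. unfold y. f_equal. lia.
  - assert (Hpre : forall k j, exists r, u (k + j)%nat = u k ++ r).
    { intros k j. induction j as [|j [r Hr]].
      - exists nil. rewrite Nat.add_0_r, app_nil_r. reflexivity.
      - destruct (Hu (k + j)%nat) as [_ [q Hq]]. exists (r ++ q :: nil).
        replace (k + S j)%nat with (S (k + j)) by lia. rewrite Hq, Hr, app_assoc. reflexivity. }
    assert (Hnth : forall i m, (i < m)%nat -> nth i (u m) d0 = nth i (u (S i)) d0).
    { intros i m Him. destruct (Hpre (S i) (m - S i)%nat) as [r Hr].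
      replace (S i + (m - S i))%nat with m in Hr by lia. rewrite Hr. apply app_nth1.
      destruct (Hu (S i)) as [[Hl _] _]. lia. }
    exists (fun i => fst (nth i (u (S i)) d0)), (fun i => snd (nth i (u (S i)) d0)).
    split; [|split].
    + intros i j. set (m := S (Nat.max i j)).
      rewrite <- (Hnth i m) by lia. rewrite <- (Hnth j m) by lia.
      destruct (Hu m) as [[Hl [G1 _]] _]. apply G1; lia.
    + intros k. destruct (Hu (S (2 * k))) as [[Hl [_ [G2 _]]] _]. apply G2; lia.
    + intros k. destruct (Hu (S (2 * k + 1))) as [[Hl [_ [_ G3]]] _]. apply G3; lia.
Qed.

Lemma ext_pt {A B} (dA : A -> A -> R) (dB : B -> B -> R) (a : nat -> A) (b : nat -> B) :
  is_metric dA -> is_metric dB -> complete_metric dB ->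
  (forall i j, dA (a i) (a j) = dB (b i) (b j)) ->
  forall x, (forall eps, 0 < eps -> exists i, dA x (a i) < eps) ->
  exists y, forall eps, 0 < eps -> exists i, dA x (a i) < eps /\ dB y (b i) < eps.
Proof.
  intros HA HB HC Hab x Hd.
  set (c := fun m : nat => epsilon (inhabits 0%nat) (fun i => dA x (a i) < (/2)^m)).
  assert (Hc : forall m, dA x (a (c m)) < (/2)^m).
  { intro m. apply (epsilon_spec (inhabits 0%nat) (fun i => dA x (a i) < (/2)^m)).
    apply Hd. apply pow_lt; lra. }
  destruct (HC (fun m => b (c m))) as [y Hy].
  - intros eps Heps. destruct (half_small (eps/2) ltac:(lra)) as [N HN]. exists N.
    intros m m' Hm Hm'. rewrite <- Hab.
    pose proof (d_tri dA HA (a (c m)) x (a (c m'))). rewrite (d_sym dA HA (a (c m)) x) in H.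
    pose proof (Hc m). pose proof (Hc m'). pose proof (HN m Hm). pose proof (HN m' Hm'). lra.
  - exists y. intros eps Heps. destruct (Hy eps Heps) as [N1 HN1].
    destruct (half_small eps Heps) as [N2 HN2].
    set (m := Nat.max N1 N2). exists (c m). split.
    + pose proof (Hc m). pose proof (HN2 m ltac:(lia)). lra.
    + rewrite (d_sym dB HB). apply HN1. lia.
Qed.

Lemma quad {T} (d : T -> T -> R) : is_metric d -> forall x x' u u',
  Rabs (d x x' - d u u') <= d x u + d x' u'.
Proof. intros Hm x x' u u'. apply Rabs_le.
  pose proof (d_tri d Hm x u x'). pose proof (d_tri d Hm u u' x').
  pose proof (d_tri d Hm u x u'). pose proof (d_tri d Hm x x' u').
  pose proof (d_sym d Hm u x). pose proof (d_sym d Hm u' x'). lra. Qed.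

Lemma corr {A B} (dA : A -> A -> R) (dB : B -> B -> R) (a : nat -> A) (b : nat -> B) :
  is_metric dA -> is_metric dB -> (forall i j, dA (a i) (a j) = dB (b i) (b j)) ->
  forall x y x' y',
  (forall eps, 0 < eps -> exists i, dA x (a i) < eps /\ dB y (b i) < eps) ->
  (forall eps, 0 < eps -> exists i, dA x' (a i) < eps /\ dB y' (b i) < eps) ->
  dB y y' = dA x x'.
Proof.
  intros HA HB Hab x y x' y' H1 H2. apply Rminus_diag_uniq. apply zero_of_small. intros eta Heta.
  destruct (H1 (eta/4) ltac:(lra)) as [i [Hi1 Hi2]]. destruct (H2 (eta/4) ltac:(lra)) as [j [Hj1 Hj2]].
  pose proof (quad dA HA x x' (a i) (a j)). pose proof (quad dB HB y y' (b i) (b j)).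
  rewrite Hab in H. apply abs_bt in H. apply abs_bt in H0. apply Rabs_le. lra.
Qed.

Lemma bil2 {X U} (dX : X -> X -> R) (dU : U -> U -> R) lam phi :
  is_metric dX -> is_metric dU -> 0 < lam -> bilipschitz_bij dX dU lam phi ->
  forall a b, dU (phi a) (phi b) <= lam * dX a b /\ dX a b <= lam * dU (phi a) (phi b).
Proof. intros HX HU Hl [_ H] a b. destruct (classic (a = b)) as [->|E].
  - rewrite (d_refl dX HX), (d_refl dU HU). lra.
  - destruct (H a b E). lra. Qed.

Theorem theorem3p8 (U : Type) (dU : U -> U -> R) (X : Type) (dX : X -> X -> R) :
  urysohn_space dU -> is_metric dX -> almost_isometric dX dU -> isometric dX dU.
Proof.
  intros [HU [HcU [[s Hs] HF]]] HX HA.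
  set (u0 := s 0%nat).
  assert (EU : Ext dU) by (apply (U_Ext dU u0); auto).
  destruct (HA 2 ltac:(lra)) as [phi Hphi].
  pose proof (bil2 dX dU 2 phi HX HU ltac:(lra) Hphi) as Hb.
  destruct Hphi as [[Hinj Hsur] _].
  set (psi := fun y => epsilon (inhabits (s 0%nat)) (fun y' => y' = y)). clear psi.
  assert (HcX : complete_metric dX).
  { intros v Hv. destruct (HcU (fun m => phi (v m))) as [l Hl].
    - intros eps Heps. destruct (Hv (eps/2) ltac:(lra)) as [N HN]. exists N. intros m m' Hm Hm'.
      pose proof (HN m m' Hm Hm'). pose proof (proj1 (Hb (v m) (v m'))). lra.
    - destruct (Hsur l) as [x Hx]. exists x. intros eps Heps. destruct (Hl (eps/2) ltac:(lra)) as [N HN].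
      exists N. intros m Hm. pose proof (HN m Hm). pose proof (proj2 (Hb (v m) x)). rewrite Hx in H0. lra. }
  assert (Hsep : exists sX : nat -> X, forall x eps, 0 < eps -> exists n, dX x (sX n) < eps).
  { destruct (Hsur u0) as [x0 _].
    set (sX := fun n => epsilon (inhabits x0) (fun x => phi x = s n)).
    assert (HsX : forall n, phi (sX n) = s n).
    { intro n. apply (epsilon_spec (inhabits x0) (fun x => phi x = s n)). apply Hsur. }
    exists sX. intros x eps Heps. destruct (Hs (phi x) (eps/2) ltac:(lra)) as [n Hn].
    exists n. pose proof (proj2 (Hb x (sX n))). rewrite HsX in H. lra. }
  destruct Hsep as [sX HsX].
  assert (EX : Ext dX).
  { apply Ext_X; auto. intros n p g eps HK He. apply (AP_X dX dU); auto. }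
  destruct (bf dX dU sX s HX HU EX EU) as [a [b [Hab [Ha Hb']]]].
  assert (Hba : forall i j, dU (b i) (b j) = dX (a i) (a j)) by (intros; symmetry; apply Hab).
  set (Rel := fun x y => forall eps, 0 < eps -> exists i, dX x (a i) < eps /\ dU y (b i) < eps).
  assert (HR1 : forall x, exists y, Rel x y).
  { intros x. apply (ext_pt dX dU a b HX HU HcU Hab x).
    intros eps He. destruct (HsX x eps He) as [k Hk]. exists (2 * k)%nat. rewrite Ha. auto. }
  assert (HR2 : forall y, exists x, Rel x y).
  { intros y. destruct (ext_pt dU dX b a HU HX HcX Hba y) as [x Hx].
    - intros eps He. destruct (Hs y eps He) as [k Hk]. exists (2 * k + 1)%nat. rewrite Hb'. auto.
    - exists x. intros eps He. destruct (Hx eps He) as [i [H1 H2]]. exists i. auto. }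
  set (Phi := fun x => epsilon (inhabits u0) (Rel x)).
  assert (HPhi : forall x, Rel x (Phi x)).
  { intro x. apply (epsilon_spec (inhabits u0) (Rel x)). apply HR1. }
  assert (Hiso : forall x x', dU (Phi x) (Phi x') = dX x x').
  { intros x x'. apply (corr dX dU a b HX HU Hab); apply HPhi. }
  exists Phi. split; [split|exact Hiso].
  - intros x x' E. apply (d_eq dX HX). rewrite <- Hiso, E. apply (d_refl dU HU).
  - intros y. destruct (HR2 y) as [x Hx]. exists x. apply (d_eq dU HU).
    rewrite (corr dX dU a b HX HU Hab x (Phi x) x y (HPhi x) Hx). apply (d_refl dX HX).
Qed.
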